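(* Let $0 \le \alpha \le \beta < \infty$ with $\alpha + \beta > 0$, and let $\varphi\colon \mathbb{R} \to \mathbb{R}$ satisfy $\alpha \le \frac{\varphi(a) - \varphi(b)}{a - b} \le \beta$ for all $a \neq b$. Let $\phi\colon \mathbb{R}^{n_1} \to \mathbb{R}^{n_1}$, $\phi(v) = (\varphi(v_1),\dots,\varphi(v_{n_1}))$. Let $W \in \mathbb{R}^{n_1 \times n_0}$, $\rho > 0$, and let $T \in \mathbb{R}^{n_1 \times n_1}$ be diagonal and positive definite, such that $$W W^\top \preceq \frac{2\rho}{(\alpha+\beta)^2}\, T^{-1}.$$ Then the map $h\colon \mathbb{R}^{n_0} \to \mathbb{R}^{n_0}$, $$h(x) = \sqrt{\rho}\, x - \frac{\alpha+\beta}{\sqrt{\rho}}\, W^\top T\, \phi(Wx),$$ satisfies $\|h(x) - h(x')\|_2 \le \sqrt{\rho}\,\|x - x'\|_2$ for all $x, x' \in \mathbb{R}^{n_0}$.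
   Context: $\preceq$ denotes the Loewner (positive semidefinite) order on symmetric matrices. *)

(* Defs.v *)
(* real matrices over an abstract R : rcfType (needs square roots). *)
From mathcomp Require Import all_boot all_order all_algebra.
Set Implicit Arguments. Unset Strict Implicit. Unset Printing Implicit Defensive.
Import Order.TTheory GRing.Theory Num.Theory.
Local Open Scope ring_scope.

Definition qform (R : rcfType) (n : nat) (A : 'M[R]_n) (v : 'cV[R]_n) : R :=
  (v^T *m A *m v) 0 0.

Definition psd (R : rcfType) (n : nat) (A : 'M[R]_n) : Prop :=
  A^T = A /\ forall v : 'cV[R]_n, 0 <= qform A v.

Definition posdef (R : rcfType) (n : nat) (A : 'M[R]_n) : Prop :=
  A^T = A /\ forall v : 'cV[R]_n, v != 0 -> 0 < qform A v.

Definition loewner_le (R : rcfType) (n : nat) (A B : 'M[R]_n) : Prop :=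
  psd (B - A).

Definition norm2 (R : rcfType) (n : nat) (v : 'cV[R]_n) : R :=
  Num.sqrt (\sum_i v i 0 ^+ 2).

Definition cmap (R : rcfType) (n : nat) (f : R -> R) (v : 'cV[R]_n) : 'cV[R]_n :=
  \col_i f (v i 0).

(* Main.v *)
Require Import Defs.
From mathcomp Require Import all_boot all_order all_algebra.
From mathcomp Require Import ring lra.
Import Order.TTheory GRing.Theory Num.Theory.
Local Open Scope ring_scope.
Set Implicit Arguments. Unset Strict Implicit.

Definition ip (R : rcfType) n (a b : 'cV[R]_n) : R := \sum_i a i 0 * b i 0.

Lemma ipDl (R : rcfType) n (a b c : 'cV[R]_n) : ip (a + b) c = ip a c + ip b c.
Proof. by rewrite /ip -big_split; apply: eq_bigr => i _; rewrite !mxE mulrDl. Qed.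

Lemma ipNl (R : rcfType) n (a c : 'cV[R]_n) : ip (- a) c = - ip a c.
Proof. by rewrite /ip -sumrN; apply: eq_bigr => i _; rewrite !mxE mulNr. Qed.

Lemma ipZl (R : rcfType) n k (a c : 'cV[R]_n) : ip (k *: a) c = k * ip a c.
Proof. by rewrite /ip mulr_sumr; apply: eq_bigr => i _; rewrite !mxE mulrA. Qed.

Lemma ipC (R : rcfType) n (a c : 'cV[R]_n) : ip a c = ip c a.
Proof. by rewrite /ip; apply: eq_bigr => i _; rewrite mulrC. Qed.

Lemma ipBl (R : rcfType) n (a b c : 'cV[R]_n) : ip (a - b) c = ip a c - ip b c.
Proof. by rewrite ipDl ipNl. Qed.

Lemma ip_mulmx (R : rcfType) m n (A : 'M[R]_(m, n)) a b :
  ip (A *m a) b = ip a (A^T *m b).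
Proof.
rewrite /ip.
under eq_bigr => i _ do rewrite mxE mulr_suml.
rewrite exchange_big /=; apply: eq_bigr => j _.
rewrite mxE mulr_sumr; apply: eq_bigr => i _; rewrite !mxE; ring.
Qed.

Lemma qformE (R : rcfType) n (A : 'M[R]_n) v : qform A v = ip v (A *m v).
Proof. by rewrite /qform -mulmxA !mxE; apply: eq_bigr => i _; rewrite !mxE. Qed.

Lemma norm2E (R : rcfType) n (v : 'cV[R]_n) : norm2 v = Num.sqrt (ip v v).
Proof. by rewrite /norm2 /ip; congr Num.sqrt; apply: eq_bigr => i _; rewrite expr2. Qed.

Lemma diag_mulE (R : rcfType) n (T : 'M[R]_n) (b : 'cV[R]_n) i :
  is_diag_mx T -> (T *m b) i 0 = T i i * b i 0.
Proof.
move/is_diag_mxP=> dT; rewrite mxE (bigD1 i) //= big1 ?addr0 // => j ji.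
by rewrite dT ?mul0r // eq_sym.
Qed.

Lemma ip_diag (R : rcfType) n (T : 'M[R]_n) a b :
  is_diag_mx T -> ip a (T *m b) = \sum_i T i i * (a i 0 * b i 0).
Proof. by move=> dT; apply: eq_bigr => i _; rewrite diag_mulE //; ring. Qed.

Lemma diag_pos (R : rcfType) n (T : 'M[R]_n) i :
  is_diag_mx T -> posdef T -> 0 < T i i.
Proof.
move=> dT [_ pT].
have nz : (delta_mx i 0 : 'cV[R]_n) != 0.
  apply/negP => /eqP/matrixP/(_ i 0); rewrite !mxE !eqxx /= => /eqP.
  by rewrite oner_eq0.
have := pT _ nz; rewrite qformE ip_diag // (bigD1 i) //= big1 ?addr0.
  by rewrite !mxE !eqxx /= !mulr1.
by move=> j ji; rewrite !mxE (negbTE ji) /= !mul0r mulr0.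
Qed.

Lemma sector (R : rcfType) (alpha beta : R) (varphi : R -> R) a b :
  0 <= alpha ->
  (forall a b : R, a != b -> alpha <= (varphi a - varphi b) / (a - b) <= beta) ->
  (varphi a - varphi b) * (varphi a - varphi b)
   - (alpha + beta) * ((a - b) * (varphi a - varphi b)) <= 0.
Proof.
move=> a0 H; have [->|ab] := eqVneq a b; first by rewrite !subrr !mul0r mulr0 subrr.
have /andP[h1 h2] := H a b ab.
set s := (varphi a - varphi b) / (a - b) in h1 h2.
have nz : a - b != 0 by rewrite subr_eq0.
have -> : varphi a - varphi b = s * (a - b) by rewrite /s divfK.
have D : 0 <= (a - b) * (a - b) by rewrite -expr2 sqr_ge0.
have hs : s * (s - (alpha + beta)) <= 0 by nra.
have -> : s * (a - b) * (s * (a - b)) - (alpha + beta) * ((a - b) * (s * (a - b)))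
  = ((a - b) * (a - b)) * (s * (s - (alpha + beta))) by ring.
exact: mulr_ge0_le0.
Qed.

Lemma ipBr (R : rcfType) n (a b c : 'cV[R]_n) : ip c (a - b) = ip c a - ip c b.
Proof. by rewrite ipC ipBl ipC [ip b c]ipC. Qed.

Lemma ipZr (R : rcfType) n k (a c : 'cV[R]_n) : ip c (k *: a) = k * ip c a.
Proof. by rewrite ipC ipZl ipC. Qed.

Lemma ip_ge0 (R : rcfType) n (a : 'cV[R]_n) : 0 <= ip a a.
Proof. by apply: sumr_ge0 => i _; rewrite -expr2 sqr_ge0. Qed.

Theorem proposition2 (R : rcfType) (n0 n1 : nat) (alpha beta rho : R)
  (varphi : R -> R) (W : 'M[R]_(n1, n0)) (T : 'M[R]_n1) :
  0 <= alpha -> alpha <= beta -> 0 < alpha + beta ->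
  (forall a b : R, a != b ->
     alpha <= (varphi a - varphi b) / (a - b) <= beta) ->
  0 < rho ->
  is_diag_mx T -> posdef T ->
  loewner_le (W *m W^T) ((2 * rho / (alpha + beta) ^+ 2) *: invmx T) ->
  let h := fun x : 'cV[R]_n0 =>
    Num.sqrt rho *: x
    - ((alpha + beta) / Num.sqrt rho) *: (W^T *m T *m cmap varphi (W *m x)) in
  forall x x' : 'cV[R]_n0,
    norm2 (h x - h x') <= Num.sqrt rho * norm2 (x - x').
Proof.
move=> a0 ab c0 Hphi r0 dT pT Hl h x x'.
set c := alpha + beta.
set s := Num.sqrt rho.
set k := c / s.
set d := x - x'.
set p := cmap varphi (W *m x) - cmap varphi (W *m x').
set u := W *m d.
set q := T *m p.
have s0 : 0 < s by rewrite sqrtr_gt0.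
have he : h x - h x' = s *: d - k *: (W^T *m q).
  rewrite /h /q /p /d !mulmxA mulmxBr.
  by apply/matrixP => i j; rewrite !mxE /k /s /c; ring.
rewrite !norm2E he /s -sqrtrM ?(ltW r0) // ler_sqrt; last by rewrite mulr_ge0 ?(ltW r0) ?ip_ge0.
set D := ip d d.
set U := ip u (T *m p).
set P := ip p (T *m p).
set Q := ip (W^T *m q) (W^T *m q).
have F1 : ip (W^T *m q) d = U by rewrite ip_mulmx trmxK ipC /U.
have F1' : ip d (W^T *m q) = U by rewrite ipC.
have -> : ip (s *: d - k *: (W^T *m q)) (s *: d - k *: (W^T *m q))
   = s * s * D - 2 * (s * k) * U + k * k * Q.
  by rewrite !ipBl !ipZl !ipBr !ipZr F1 F1' -/D -/Q; ring.
have ss : s * s = rho by rewrite -expr2 sqr_sqrtr ?(ltW r0).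
have sk : s * k = c by rewrite /k mulrC divfK // gt_eqF.
rewrite ss sk.
have uT : T \in unitmx.
  rewrite unitmxE det_trig ?is_diag_mx_is_trig // unitfE.
  by rewrite gt_eqF // prodr_gt0 // => i _; apply: diag_pos.
have PU : P - c * U <= 0.
  rewrite /P /U !ip_diag // mulr_sumr -sumrB.
  apply: sumr_le0 => i _.
  rewrite /u /d mulmxBr /p !mxE.
  rewrite [c * (T i i * _)]mulrCA -mulrBr.
  apply: mulr_ge0_le0; first exact/ltW/diag_pos.
  exact: sector.
have QP : Q <= (2 * rho / c ^+ 2) * P.
  case: Hl => _ /(_ q); rewrite qformE mulmxBl ipBr.
  rewrite -scalemxAl ipZr mulKmx // [ip q p]ipC -/P.
  by rewrite /Q ip_mulmx trmxK mulmxA subr_ge0.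
have kk : 0 <= k * k by rewrite -expr2 sqr_ge0.
have kQ : k * k * Q <= 2 * P.
  apply: le_trans (ler_wpM2l kk QP) _.
  have -> : k * k * (2 * rho / c ^+ 2 * P) = 2 * P.
    by rewrite /k -ss; field; rewrite !gt_eqF.
  exact: lexx.
lra.
Qed.
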